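(* Let $n,m\ge 1$, let $\mathbf y\in\{0,1\}^n$ be fixed training labels, let $\Psi\in\mathbb R^{m\times n}$ be a feature matrix, and let $\mathrm{metric}$ be of the form $$\mathrm{metric}(\hat{\mathbf y},\check{\mathbf y})=\sum_{j=1}^{J}\frac{a_j\,\mathrm{TP}+b_j\,\mathrm{TN}+f_j(\mathrm{PP},\mathrm{AP})}{g_j(\mathrm{PP},\mathrm{AP})}.$$ Then $$\max_{\theta\in\mathbb R^m}\ \min_{\mathcal Q}\ \max_{\mathcal P}\ \mathbb E_{\hat{\mathbf Y}\sim\mathcal P,\check{\mathbf Y}\sim\mathcal Q}\Big[\mathrm{metric}(\hat{\mathbf Y},\check{\mathbf Y})-\theta^\top\big(\Psi\check{\mathbf Y}-\Psi\mathbf y\big)\Big]$$ (where $\mathcal P,\mathcal Q$ range over all probability distributions on $\{0,1\}^n$ and $\hat{\mathbf Y},\check{\mathbf Y}$ are independent) is equal to $$\max_{\theta\in\mathbb R^m}\Big\{\min_{\mathbf Q\in\Delta}\max_{\mathbf P\in\Delta}\Big[\sum_{k=0}^n\sum_{l=0}^n\sum_{j=1}^J\frac{1}{g_j(k,l)}\Big\{a_j[\mathbf p_k^1\cdot\mathbf q_l^1]+b_j[\mathbf p_k^0\cdot\mathbf q_l^0]+f_j(k,l)r_ks_l\Big\}-\langle\mathbf Q^\top\mathbf 1,\Psi^\top\theta\rangle\Big]+\langle\mathbf y,\Psi^\top\theta\rangle\Big\}.$$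
   Context: For $\hat{\mathbf y},\check{\mathbf y}\in\{0,1\}^n$: $\mathrm{TP}=\sum_i\hat y_i\check y_i$, $\mathrm{TN}=\sum_i(1-\hat y_i)(1-\check y_i)$, $\mathrm{PP}=\sum_i\hat y_i$, $\mathrm{AP}=\sum_i\check y_i$; $a_j,b_j\in\mathbb R$ and $f_j,g_j:\{0,\dots,n\}^2\to\mathbb R$ with $g_j$ never zero. Features: the feature of the whole label vector is $\phi(\mathbf x,\mathbf y)=\sum_i\phi(x_i,y_i)$ with $\phi(x_i,0)=0$, and the $i$-th column of $\Psi$ is $\phi(x_i,1)\in\mathbb R^m$, so $\phi(\mathbf x,\mathbf y)=\Psi\mathbf y$. The set $\Delta\subset\mathbb R^{n\times n}$ (entries $p_{i,k}$, $i,k\in\{1,\dots,n\}$) is $$\Delta=\Big\{\mathbf P:\ p_{i,k}\ge 0\ \forall i,k;\ \ p_{i,k}\le\tfrac1k\textstyle\sum_{j}p_{j,k}\ \forall i,k;\ \ \sum_k\tfrac1k\sum_ip_{i,k}\le 1\Big\}.$$ From $\mathbf P\in\Delta$ one defines: $\mathbf p_k^1=\mathbf P_{(:,k)}$ for $k\ge1$ and $\mathbf p_0^1=\mathbf 0$; $r_k=\frac1k\mathbf 1^\top\mathbf p_k^1$ for $k\ge1$ and $r_0=1-\sum_{k=1}^n r_k$; $\mathbf p_k^0=r_k\mathbf 1-\mathbf p_k^1$ for $k\in\{0,\dots,n\}$. The quantities $\mathbf q_l^1,\mathbf q_l^0,s_l$ are defined from $\mathbf Q$ in the same way. (These represent $(\mathbf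 p_k^a)_i=\mathcal P(\hat Y_i=a,\sum\hat Y=k)$ and $r_k=\mathcal P(\sum\hat Y=k)$.) *)

(* Defs.v *)
From HB Require Import structures.
From mathcomp Require Import all_boot all_order all_algebra.
From mathcomp Require Import all_classical all_reals.
From mathcomp Require Import ereal.
Set Implicit Arguments. Unset Strict Implicit. Unset Printing Implicit Defensive.
Import Order.TTheory GRing.Theory Num.Theory.
Local Open Scope ring_scope.
Local Open Scope classical_set_scope.

Section Defs.
Variable R : realType.

Definition lab (n : nat) := {ffun 'I_n -> bool}.

Definition TP n (yh yc : lab n) : nat := \sum_(i < n) (yh i && yc i).
Definition TN n (yh yc : lab n) : nat := \sum_(i < n) (~~ yh i && ~~ yc i).
Definition PP n (yh : lab n) : nat := \sum_(i < n) yh i.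
Definition AP n (yc : lab n) : nat := \sum_(i < n) yc i.

Definition metric n J (a b : 'I_J -> R) (f g : 'I_J -> nat -> nat -> R)
    (yh yc : lab n) : R :=
  \sum_(j < J) (a j * (TP yh yc)%:R + b j * (TN yh yc)%:R
                 + f j (PP yh) (AP yc)) / g j (PP yh) (AP yc).

Definition labvec n (y : lab n) : 'cV[R]_n := \col_i (y i)%:R.

Definition dotc m (u v : 'cV[R]_m) : R := \sum_(i < m) u i 0 * v i 0.

Definition is_dist n (P : lab n -> R) : Prop :=
  (forall x, 0 <= P x) /\ \sum_(x : lab n) P x = 1.

Definition game_value n m (J : nat) (a b : 'I_J -> R) (f g : 'I_J -> nat -> nat -> R) (Psi : 'M[R]_(m, n)) (y : lab n)
    (theta : 'cV[R]_m) (P Q : lab n -> R) : R :=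
  \sum_(yh : lab n) \sum_(yc : lab n) P yh * Q yc *
    (metric a b f g yh yc - dotc theta (Psi *m (labvec yc - labvec y))).

(* The set Delta; column index k : 'I_n stands for the count k+1 *)
Definition inDelta n (P : 'M[R]_n) : Prop :=
  [/\ (forall i k, 0 <= P i k),
      (forall i k, P i k <= (k.+1)%:R^-1 * \sum_(j < n) P j k) &
      \sum_(k < n) (k.+1)%:R^-1 * \sum_(i < n) P i k <= 1].

(* p_k^1 for k in {0,...,n}; p_0^1 = 0 *)
Definition p1 n (P : 'M[R]_n) (k : nat) (i : 'I_n) : R :=
  if (0 < k)%N then
    (if @insub _ (fun x => (x < n)%N) 'I_n k.-1 is Some o then P i o else 0)
  else 0.

Definition rpos n (P : 'M[R]_n) (k : nat) : R :=
  k%:R^-1 * \sum_(i < n) p1 P k i.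

Definition rr n (P : 'M[R]_n) (k : nat) : R :=
  if k == 0%N then 1 - \sum_(1 <= k' < n.+1) rpos P k' else rpos P k.

Definition p0 n (P : 'M[R]_n) (k : nat) (i : 'I_n) : R := rr P k - p1 P k i.

Definition dotn n (u v : 'I_n -> R) : R := \sum_(i < n) u i * v i.

Definition PsiTtheta n m (Psi : 'M[R]_(m, n)) (theta : 'cV[R]_m) (i : 'I_n) : R :=
  \sum_(d < m) Psi d i * theta d 0.

(* marginal vector of Q: i-th entry = sum_k q_{i,k} = P(Yc_i = 1) *)
Definition marg n (Q : 'M[R]_n) (i : 'I_n) : R := \sum_(k < n) Q i k.

Definition marg_objective n m (J : nat) (a b : 'I_J -> R) (f g : 'I_J -> nat -> nat -> R)
    (Psi : 'M[R]_(m, n)) (theta : 'cV[R]_m) (P Q : 'M[R]_n) : R :=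
  \sum_(0 <= k < n.+1) \sum_(0 <= l < n.+1) \sum_(j < J)
     (g j k l)^-1 * (a j * dotn (p1 P k) (p1 Q l)
                     + b j * dotn (p0 P k) (p0 Q l)
                     + f j k l * rr P k * rr Q l)
  - dotn (marg Q) (PsiTtheta Psi theta).

End Defs.

(* Main.v *)
Require Import Defs.
From HB Require Import structures.
From mathcomp Require Import all_boot all_order all_algebra.
From mathcomp Require Import all_classical all_reals.
From mathcomp Require Import ereal.
From mathcomp Require Import ring lra.
Import Order.TTheory GRing.Theory Num.Theory.
Set Implicit Arguments. Unset Strict Implicit. Unset Printing Implicit Defensive.
Local Open Scope ring_scope.
Local Open Scope classical_set_scope.
Section Comb.
Variable R : realType.

Definition consl n (b : bool) (x : lab n) : lab n.+1 :=
  [ffun i => if unlift ord0 i is Some j then x j else b].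
Definition tl n (x : lab n.+1) : lab n := [ffun j => x (lift ord0 j)].

Lemma consl0 n b (x : lab n) : consl b x ord0 = b.
Proof. by rewrite ffunE unlift_none. Qed.
Lemma conslS n b (x : lab n) j : consl b x (lift ord0 j) = x j.
Proof. by rewrite ffunE liftK. Qed.
Lemma tl_consl n b (x : lab n) : tl (consl b x) = x.
Proof. by apply/ffunP => j; rewrite ffunE conslS. Qed.
Lemma consl_tl n (x : lab n.+1) : consl (x ord0) (tl x) = x.
Proof.
apply/ffunP => i; rewrite ffunE; case: (unliftP ord0 i) => [j ->|->] //.
by rewrite ffunE.
Qed.

Lemma sum_lab_split n (F : lab n.+1 -> R) :
  \sum_x F x = \sum_x F (consl true x) + \sum_x F (consl false x).
Proof.
rewrite (reindex (fun p : bool * lab n => consl p.1 p.2)) /=; last first.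
  exists (fun x : lab n.+1 => (x ord0, tl x)) => [[b x] _|x _] /=.
    by rewrite consl0 tl_consl.
  by rewrite consl_tl.
rewrite -(pair_bigA _ (fun b x => F (consl b x))) /=.
by rewrite big_bool.
Qed.

Lemma PP_recl n (x : lab n.+1) : PP x = (x ord0 + PP (tl x))%N.
Proof.
rewrite /PP big_ord_recl; congr (_ + _)%N.
by apply: eq_bigr => j _; rewrite ffunE.
Qed.

Lemma PP_consl n (b : bool) (x : lab n) : PP (consl b x) = (b + PP x)%N.
Proof. by rewrite PP_recl consl0 tl_consl. Qed.

Lemma between n (lo hi : 'I_n -> R) t :
  (forall i, lo i <= hi i) -> \sum_i lo i <= t -> t <= \sum_i hi i ->
  exists u : 'I_n -> R, (forall i, lo i <= u i <= hi i) /\ \sum_i u i = t.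
Proof.
move=> lohi hL hH.
have hLH : \sum_i lo i <= \sum_i hi i by apply: ler_sum.
case: (eqVneq (\sum_i hi i) (\sum_i lo i)) => e.
  exists lo; split=> [i|]; first by rewrite lexx lohi.
  by apply/le_anti; rewrite hL -e hH.
have d0 : 0 < \sum_i hi i - \sum_i lo i.
  by rewrite subr_gt0 lt_neqAle eq_sym e hLH.
pose lam := (t - \sum_i lo i) / (\sum_i hi i - \sum_i lo i).
have l0 : 0 <= lam by rewrite divr_ge0 // subr_ge0.
have l1 : lam <= 1 by rewrite ler_pdivrMr // mul1r lerD2r.
exists (fun i => lo i + lam * (hi i - lo i)); split.
  move=> i; have := lohi i => h; apply/andP; split.
    by rewrite lerDl mulr_ge0 // subr_ge0.
  nra.
rewrite big_split /= -mulr_sumr sumrB /lam mulfVK; last by rewrite gt_eqF.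
by rewrite addrC subrK.
Qed.


Lemma neq0_lra (x : R) : (0 < x \/ x < 0) -> x != 0.
Proof. by case=> h; [rewrite gt_eqF | rewrite lt_eqF]. Qed.

Lemma maxr0E (x : R) : Num.max 0 x = if 0 <= x then x else 0.
Proof. by rewrite maxEle. Qed.

Lemma key n (v : 'I_n -> R) (k : nat) (a : R) : 0 <= a -> a <= 1 ->
  (forall j, 0 <= v j <= 1) -> \sum_j v j = k%:R + a ->
  \sum_j Num.max 0 (v j - a) <= (1 - a) * k%:R.
Proof.
move=> a0 a1 hv hs.
have -> : \sum_j Num.max 0 (v j - a) = \sum_(j | a < v j) (v j - a).
  rewrite [RHS]big_mkcond /=; apply: eq_bigr => j _.
  rewrite maxr0E; case: (ltP a (v j)) => h.
    by rewrite ifT //; lra.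
  case: ifP => // h2; apply/eqP; rewrite subr_eq0 eq_le h /=; lra.
set s := (\sum_(j | (a < v j)%R) 1)%N.
have hsR : s%:R = \sum_(j | a < v j) (1:R) by rewrite natr_sum.
have hc : forall c : R, \sum_(j | a < v j) c = s%:R * c.
  by move=> c; rewrite hsR mulr_suml; apply: eq_bigr => j _; rewrite mul1r.
case: (leqP s k) => hsk.
  apply: (le_trans (y := \sum_(j | a < v j) (1 - a))).
    by apply: ler_sum => j _; have := hv j; lra.
  rewrite hc mulrC ler_wpM2l ?ler_nat //; lra.
rewrite sumrB hc.
have hP : \sum_(j | a < v j) v j <= \sum_j v j.
  rewrite [X in _ <= X](bigID (fun j => a < v j)) /= lerDl.
  by apply: sumr_ge0 => j _; have := hv j; lra.
have hs1 : (k.+1)%:R <= s%:R :> R by rewrite ler_nat.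
have : (k.+1)%:R = k%:R + 1 :> R by rewrite -addn1 natrD.
nra.
Qed.

Definition hvalid n (w : lab n -> R) (k : nat) (v : 'I_n -> R) :=
  [/\ forall x, 0 <= w x, forall x, w x != 0 -> PP x = k,
      \sum_x w x = 1 & forall i, \sum_x w x * (x i)%:R = v i].

Lemma combine n k (p : R) (wu wz : lab n -> R) (u z : 'I_n -> R)
    (v : 'I_n.+1 -> R) :
  0 <= p <= 1 ->
  (forall x, 0 <= wu x) -> (forall x, 0 <= wz x) ->
  \sum_x wu x = 1 -> \sum_x wz x = 1 ->
  (forall j, \sum_x wu x * (x j)%:R = u j) ->
  (forall j, \sum_x wz x * (x j)%:R = z j) ->
  (p != 0 -> forall x, wu x != 0 -> (PP x).+1 = k) ->
  (p != 1 -> forall x, wz x != 0 -> PP x = k) ->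
  v ord0 = p -> (forall j, v (lift ord0 j) = p * u j + (1 - p) * z j) ->
  exists w, hvalid w k v.
Proof.
move=> /andP[p0 p1] wu0 wz0 Su Sz Mu Mz Hu Hz v0 vS.
exists (fun x : lab n.+1 => if x ord0 then p * wu (tl x) else (1 - p) * wz (tl x)).
split.
- move=> x; case: ifP => _; apply: mulr_ge0 => //; lra.
- move=> x; rewrite PP_recl; case: (x ord0) => /= H.
    move: H; rewrite mulf_eq0 negb_or => /andP[hp hw].
    by rewrite add1n Hu.
  move: H; rewrite mulf_eq0 negb_or => /andP[hp hw].
  by rewrite add0n Hz //; apply: contra hp => /eqP ->; rewrite subrr.
- rewrite sum_lab_split.
  rewrite (eq_bigr (fun x => p * wu x)); last by move=> x _; rewrite /= consl0 tl_consl.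
  rewrite [X in _ + X](eq_bigr (fun x => (1 - p) * wz x)); last by move=> x _; rewrite /= consl0 tl_consl.
  by rewrite -!mulr_sumr Su Sz !mulr1 addrC subrK.
- move=> i; case: (unliftP ord0 i) => [j ->|->].
    rewrite sum_lab_split.
    rewrite (eq_bigr (fun x => p * (wu x * (x j)%:R))); last first.
      by move=> x _; rewrite /= consl0 tl_consl conslS mulrA.
    rewrite [X in _ + X](eq_bigr (fun x => (1 - p) * (wz x * (x j)%:R))); last first.
      by move=> x _; rewrite /= consl0 tl_consl conslS mulrA.
    by rewrite -!mulr_sumr Mu Mz vS.
  rewrite sum_lab_split.
  rewrite (eq_bigr (fun x => p * wu x)); last first.
    by move=> x _; rewrite /= consl0 tl_consl mulr1.
  rewrite [X in _ + X](eq_bigr (fun x => 0)); last first.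
    by move=> x _; rewrite /= consl0 tl_consl mulr0.
  by rewrite -!mulr_sumr Su big1 // mulr1 addr0.
Qed.


Lemma natS (k : nat) : (k.+1)%:R = k%:R + 1 :> R.
Proof. by rewrite -addn1 natrD. Qed.

Lemma hyper n : forall (k : nat) (v : 'I_n -> R), (forall i, 0 <= v i <= 1) ->
  \sum_i v i = k%:R -> exists w : lab n -> R, hvalid w k v.
Proof.
elim: n => [|n IH] k v hv hs.
  move: hs; rewrite big_ord0 => /esym/eqP; rewrite pnatr_eq0 => /eqP ->.
  exists (fun _ => 1); split.
  - by move=> _; rewrite ler01.
  - by move=> x _; rewrite /PP big_ord0.
  - by rewrite sumr_const card_ffun card_bool card_ord expn0.
  - by case.
pose p := v ord0; pose v' := fun j => v (lift ord0 j).
have hs' : p + \sum_j v' j = k%:R by rewrite -hs big_ord_recl.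
have hp : 0 <= p <= 1 by apply: hv.
have hv' : forall j, 0 <= v' j <= 1 by move=> j; apply: hv.
have hp0 : 0 <= p by case/andP: hp.
have hp1 : p <= 1 by case/andP: hp.
have hsv' : 0 <= \sum_j v' j by apply: sumr_ge0 => j _; case/andP: (hv' j).
have [/eqP e0|pn0] := boolP (p == 0).
  have sv : \sum_j v' j = k%:R by rewrite -hs' e0 add0r.
  have [wz [Hz0 Hz1 Hz2 Hz3]] := IH k v' hv' sv.
  apply: (combine (wu := wz) (wz := wz) (u := v') (z := v') hp) => //.
    by rewrite e0 eqxx.
  by move=> j; rewrite e0 mul0r add0r subr0 mul1r.
have kpos : (0 < k)%N.
  rewrite lt0n -(pnatr_eq0 R) -hs'; apply/neq0_lra; left.
  have : 0 < p by rewrite lt_neqAle eq_sym pn0 hp0.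
  lra.
have hk : k = k.-1.+1 by rewrite prednK.
have [/eqP e1|pn1] := boolP (p == 1).
  have sv : \sum_j v' j = k.-1%:R by move: hs'; rewrite {1}hk natS e1; lra.
  have [wu [Hu0 Hu1 Hu2 Hu3]] := IH k.-1 v' hv' sv.
  apply: (combine (wu := wu) (wz := wu) (u := v') (z := v') hp) => //.
  - by move=> _ x /Hu1 ->; rewrite -hk.
  - by rewrite e1 eqxx.
  - by move=> j; rewrite e1 mul1r subrr mul0r addr0.
have pgt0 : 0 < p by rewrite lt_neqAle eq_sym pn0 hp0.
have plt1 : p < 1 by rewrite lt_neqAle pn1 hp1.
pose a := 1 - p.
have agt0 : 0 < a by rewrite /a; lra.
pose lo := fun j => Num.max 0 (v' j - a) / p.
pose hi := fun j => Num.min p (v' j) / p.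
have hlh : forall j, lo j <= hi j.
  move=> j; rewrite /lo /hi ler_pM2r ?invr_gt0 // ge_max !le_min.
  by case/andP: (hv' j) => h1 h2; rewrite /a; apply/andP; split; apply/andP; split; lra.
have hL : \sum_j lo j <= k.-1%:R.
  rewrite /lo -mulr_suml ler_pdivrMr // mulrC.
  have Hs : \sum_j v' j = k.-1%:R + a by move: hs'; rewrite /a {1}hk natS; lra.
  have a1 : a <= 1 by rewrite /a; lra.
  have := key (ltW agt0) a1 hv' Hs.
  have -> : 1 - a = p by rewrite /a; ring.
  by rewrite mulrC.
have hH : k.-1%:R <= \sum_j hi j.
  apply: (le_trans (y := \sum_j v' j)).
    by move: hs'; rewrite {1}hk natS; lra.
  apply: ler_sum => j _; rewrite /hi ler_pdivlMr // le_min.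
  by case/andP: (hv' j) => h1 h2; apply/andP; split; nra.
have [u [hu su]] := between hlh hL hH.
have hu01 : forall j, 0 <= u j <= 1.
  move=> j; case/andP: (hu j) => h1 h2; apply/andP; split.
    apply: le_trans h1; rewrite /lo divr_ge0 // le_max lexx //.
  apply: le_trans h2 _; rewrite /hi ler_pdivrMr // mul1r ge_min lexx //.
have [wu [Hu0 Hu1 Hu2 Hu3]] := IH k.-1 u hu01 su.
pose z := fun j => (v' j - p * u j) / a.
have hz01 : forall j, 0 <= z j <= 1.
  move=> j; case/andP: (hu j); rewrite /lo /hi ler_pdivrMr // ler_pdivlMr //.
  rewrite ge_max le_min => /andP[_ h1] /andP[_ h2].
  rewrite /z ler_pdivrMr // ler_pdivlMr // mul0r mul1r; apply/andP; split; nra.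
have sz : \sum_j z j = k%:R.
  rewrite /z -mulr_suml sumrB -mulr_sumr su.
  have e : \sum_j v' j = k.-1%:R + 1 - p by move: hs'; rewrite {1}hk natS; lra.
  rewrite e [in RHS]hk natS /a; field; apply: neq0_lra; left; lra.
have [wz [Hz0 Hz1 Hz2 Hz3]] := IH k z hz01 sz.
apply: (combine (wu := wu) (wz := wz) (u := u) (z := z) hp) => //.
- by move=> _ x /Hu1 ->; rewrite -hk.
- move=> j; rewrite /z -/a [X in _ + X]mulrC divfK; last by apply: neq0_lra; left.
  by rewrite /v' /=; ring.
Qed.

End Comb.
Section Marg.
Variable R : realType.
Variable n : nat.

Definition Mof (P : lab n -> R) : 'M[R]_n :=
  \matrix_(i, k) \sum_x P x * ((x i && (PP x == k.+1)%N) : nat)%:R.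

Definition cnt (P : lab n -> R) (k : nat) : R := \sum_x P x * ((PP x == k) : nat)%:R.

Lemma PP_le (x : lab n) : (PP x <= n)%N.
Proof.
rewrite /PP -[X in (_ <= X)%N]card_ord -sum1_card; apply: leq_sum => i _.
exact: leq_b1.
Qed.

Lemma PP_ge (x : lab n) i : (x i <= PP x)%N.
Proof. by rewrite /PP (bigD1 i) //= leq_addr. Qed.

Lemma PPR (x : lab n) : (PP x)%:R = \sum_i ((x i) : nat)%:R :> R.
Proof. by rewrite /PP natr_sum. Qed.

Lemma sum_pick (c : nat) (F : nat -> R) : (c <= n)%N ->
  \sum_(0 <= k < n.+1) ((c == k) : nat)%:R * F k = F c.
Proof.
move=> hc; rewrite big_mkord.
have hc' : (c < n.+1)%N by [].
rewrite (bigD1 (Ordinal hc')) //= eqxx mul1r big1 ?addr0 //.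
move=> k hk; suff -> : (c == k) = false by rewrite mul0r.
apply/negbTE; apply: contra hk => /eqP e; apply/eqP/val_inj => /=; by rewrite e.
Qed.

Lemma sum_ind (x : lab n) :
  \sum_(k < n) ((PP x == k.+1) : nat)%:R = ((0 < PP x)%N : nat)%:R :> R.
Proof.
case: (posnP (PP x)) => h.
  by rewrite big1 // => k _; rewrite h.
have hk : ((PP x).-1 < n)%N by rewrite prednK // PP_le.
rewrite (bigD1 (Ordinal hk)) //= prednK // eqxx big1 ?addr0 //.
move=> k hk'; suff -> : (PP x == k.+1) = false by [].
apply/negbTE; apply: contra hk' => /eqP e; apply/eqP/val_inj => /=; by rewrite e.
Qed.

Lemma colsum (P : lab n -> R) (k : 'I_n) :
  \sum_j Mof P j k = (k.+1)%:R * cnt P k.+1.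
Proof.
rewrite /cnt mulr_sumr.
under eq_bigr do rewrite mxE.
rewrite exchange_big /=; apply: eq_bigr => x _.
rewrite -mulr_sumr mulrCA; congr (_ * _).
case: eqP => e /=.
  by rewrite mulr1 -e PPR; apply: eq_bigr => i _; rewrite andbT.
by rewrite mulr0 big1 // => i _; rewrite andbF.
Qed.

Lemma dist_inDelta (P : lab n -> R) : is_dist P -> inDelta (Mof P).
Proof.
case=> P0 P1.
have c0 : forall k, 0 <= cnt P k.
  by move=> k; apply: sumr_ge0 => x _; rewrite mulr_ge0.
have ce : forall k : 'I_n, (k.+1)%:R^-1 * \sum_j Mof P j k = cnt P k.+1.
  by move=> k; rewrite colsum mulKf // pnatr_eq0.
split.
- by move=> i k; rewrite mxE; apply: sumr_ge0 => x _; rewrite mulr_ge0.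
- move=> i k; rewrite ce mxE; apply: ler_sum => x _.
  by rewrite ler_wpM2l // ler_nat; case: (x i); case: (PP x == _).
- under eq_bigr do rewrite ce.
  rewrite /cnt exchange_big /= -[X in _ <= X]P1; apply: ler_sum => x _.
  rewrite -mulr_sumr sum_ind ler_piMr //.
  by case: (0 < PP x)%N.
Qed.

Lemma hyper_sc (K : nat) (r : R) (c : 'I_n -> R) : 0 <= r ->
  (forall i, 0 <= c i <= r) -> \sum_i c i = K%:R * r ->
  exists w : lab n -> R, [/\ forall x, 0 <= w x, forall x, w x != 0 -> PP x = K,
      \sum_x w x = r & forall i, \sum_x w x * (x i)%:R = c i].
Proof.
move=> r0 hc hs.
have [e|rn0] := eqVneq r 0.
  exists (fun _ => 0); split.
  - by move=> _; rewrite lexx.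
  - by move=> x; rewrite eqxx.
  - by rewrite big1 // e.
  - move=> i; rewrite big1; last by move=> x _; rewrite mul0r.
    by have := hc i; rewrite e => /andP[h1 h2]; lra.

have rgt0 : 0 < r by rewrite lt_neqAle eq_sym rn0 r0.
have hv : forall i, 0 <= c i / r <= 1.
  move=> i; case/andP: (hc i) => h1 h2.
  by rewrite divr_ge0 //= ler_pdivrMr // mul1r.
have hsv : \sum_i c i / r = K%:R by rewrite -mulr_suml hs mulfK.
have [w [W0 W1 W2 W3]] := hyper hv hsv.
exists (fun x => r * w x); split.
- by move=> x; rewrite mulr_ge0.
- by move=> x; rewrite mulf_eq0 negb_or => /andP[_ /W1].
- by rewrite -mulr_sumr W2 mulr1.
- move=> i; under eq_bigr do rewrite -mulrA.
  by rewrite -mulr_sumr W3 mulrC divfK.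
Qed.

Definition zlab : lab n := [ffun => false].

Lemma inDelta_dist (Q : 'M[R]_n) : inDelta Q -> exists P, is_dist P /\ Mof P = Q.
Proof.
case=> Q0 Q1 Q2.
pose r := fun k : 'I_n => (k.+1)%:R^-1 * \sum_j Q j k.
have ex : forall k : 'I_n, exists w : lab n -> R,
    [/\ forall x, 0 <= w x, forall x, w x != 0 -> PP x = k.+1,
      \sum_x w x = r k & forall i, \sum_x w x * (x i)%:R = Q i k].
  move=> k; apply: hyper_sc.
  - by rewrite mulr_ge0 // ?invr_ge0 // sumr_ge0.
  - by move=> i; rewrite Q0 Q1.
  - by rewrite /r mulrA mulfV ?mul1r // pnatr_eq0.
have [w Hw] := boolp.choice ex.
pose r0 := 1 - \sum_k r k.
have r00 : 0 <= r0 by rewrite /r0 subr_ge0.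
exists (fun x => \sum_k w k x + (if x == zlab then r0 else 0)); split; first split.
- move=> x; rewrite addr_ge0 //; first by apply: sumr_ge0 => k _; case: (Hw k).
  by case: ifP.
- rewrite big_split /= exchange_big /=.
  rewrite (eq_bigr r); last by move=> k _; case: (Hw k).
  by rewrite -big_mkcond /= big_pred1_eq /r0 addrC subrK.
apply/matrixP => i k; rewrite mxE.
under eq_bigr do rewrite mulrDl.
rewrite big_split /= [X in _ + X]big1 ?addr0; last first.
  by move=> x _; case: eqP => [->|]; rewrite ?mul0r // ffunE /= mulr0.
under eq_bigr do rewrite mulr_suml.
rewrite exchange_big /= (bigD1 k) //= [X in _ + X]big1 ?addr0; last first.
  move=> k' hk'; apply: big1 => x _.
  case: (eqVneq (w k' x) 0) => [->|hw]; first by rewrite mul0r.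
  case: (Hw k') => _ H1 _ _; rewrite H1 // eqSS.
  suff -> : (k' == k :> nat) = false by rewrite andbF mulr0.
  by apply/negbTE.
case: (Hw k) => _ H1 _ H3; rewrite -H3; apply: eq_bigr => x _.
case: (eqVneq (w k x) 0) => [->|hw]; first by rewrite !mul0r.
by rewrite H1 // eqxx andbT.
Qed.

End Marg.
Section Game.
Variable R : realType.
Variable n : nat.

Definition m1 (P : lab n -> R) (k : nat) (i : 'I_n) : R :=
  \sum_x P x * (((PP x == k) && x i) : nat)%:R.
Definition m0 (P : lab n -> R) (k : nat) (i : 'I_n) : R :=
  \sum_x P x * (((PP x == k) && ~~ x i) : nat)%:R.

Lemma indA (c d : bool) : ((c && d) : nat)%:R = (c : nat)%:R * (d : nat)%:R :> R.
Proof. by case: c; case: d; rewrite /= ?mulr1n ?mulr0n ?mulr1 ?mulr0. Qed.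

Lemma p1E (P : lab n -> R) k i : (k <= n)%N -> p1 (Mof P) k i = m1 P k i.
Proof.
move=> kn; rewrite /p1; case: (posnP k) => [->|kp] /=.
  apply/esym/big1 => x _; case hx: (x i); last by rewrite andbF mulr0.
  have := PP_ge x i; rewrite hx andbT => h; by rewrite (negbTE (lt0n_neq0 h)) mulr0.
have hk : (k.-1 < n)%N by rewrite prednK.
rewrite (insubT (fun x => x < n)%N hk) /=.
rewrite mxE /m1; apply: eq_bigr => x _; rewrite andbC /= prednK //.
Qed.

Lemma sum_m1 (P : lab n -> R) k : \sum_i m1 P k i = k%:R * cnt P k.
Proof.
rewrite /m1 /cnt exchange_big mulr_sumr /=; apply: eq_bigr => x _.
rewrite -mulr_sumr mulrCA; congr (_ * _).
case: eqP => e /=.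
  by rewrite mulr1 -e PPR.
by rewrite mulr0 big1.
Qed.

Lemma rposE (P : lab n -> R) k : (0 < k)%N -> (k <= n)%N -> rpos (Mof P) k = cnt P k.
Proof.
move=> kp kn; rewrite /rpos.
rewrite (eq_bigr (m1 P k)); last by move=> i _; rewrite p1E.
by rewrite sum_m1 mulKf // pnatr_eq0 -lt0n.
Qed.

Lemma sum_cnt (P : lab n -> R) : is_dist P -> \sum_(0 <= k < n.+1) cnt P k = 1.
Proof.
case=> _ P1; rewrite -[RHS]P1 /cnt exchange_big /=; apply: eq_bigr => x _.
rewrite -mulr_sumr.
have := sum_pick (fun=> (1:R)) (PP_le x); under eq_bigr do rewrite mulr1.
by move=> ->; rewrite mulr1.
Qed.

Lemma rrE (P : lab n -> R) k : is_dist P -> (k <= n)%N -> rr (Mof P) k = cnt P k.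
Proof.
move=> hP kn; rewrite /rr; case: eqP => [->|k0]; last first.
  by rewrite rposE // lt0n; apply/eqP.
rewrite (eq_big_nat _ _ (F2 := cnt P)); last first.
  by move=> k' /andP[h1 h2]; rewrite rposE.
have hs := sum_cnt hP; rewrite big_ltn // in hs.
by rewrite -hs addrK.
Qed.

Lemma p0E (P : lab n -> R) k i : is_dist P -> (k <= n)%N -> p0 (Mof P) k i = m0 P k i.
Proof.
move=> hP kn; rewrite /p0 rrE // p1E // /cnt /m1 /m0 -sumrB.
apply: eq_bigr => x _; rewrite -mulrBr; congr (_ * _).
by case: (PP x == k); case: (x i); rewrite /= ?subr0 ?subrr ?sub0r.
Qed.

Lemma L1 (P Q : lab n -> R) (A B : 'I_n -> lab n -> R) :
  \sum_yh \sum_yc P yh * Q yc * \sum_i A i yh * B i yc =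
  \sum_i (\sum_yh P yh * A i yh) * (\sum_yc Q yc * B i yc).
Proof.
under [RHS]eq_bigr do rewrite big_distrlr /=.
rewrite [RHS]exchange_big /=; apply: eq_bigr => yh _.
rewrite [RHS]exchange_big /=; apply: eq_bigr => yc _.
rewrite mulr_sumr; apply: eq_bigr => i _; ring.
Qed.

Lemma L0 (P Q : lab n -> R) (A B : lab n -> R) :
  \sum_yh \sum_yc P yh * Q yc * (A yh * B yc) =
  (\sum_yh P yh * A yh) * (\sum_yc Q yc * B yc).
Proof.
rewrite big_distrlr /=; apply: eq_bigr => yh _; apply: eq_bigr => yc _; ring.
Qed.

Lemma dsumZ (c : R) (F : lab n -> lab n -> R) :
  \sum_yh \sum_yc c * F yh yc = c * \sum_yh \sum_yc F yh yc.
Proof. by rewrite mulr_sumr; apply: eq_bigr => yh _; rewrite mulr_sumr. Qed.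

Lemma lin (w X Y Z : lab n -> lab n -> R) (ga al be de : R) :
  \sum_yh \sum_yc w yh yc * (ga * (al * X yh yc + be * Y yh yc + de * Z yh yc)) =
  ga * (al * \sum_yh \sum_yc w yh yc * X yh yc + be * \sum_yh \sum_yc w yh yc * Y yh yc
       + de * \sum_yh \sum_yc w yh yc * Z yh yc).
Proof.
transitivity (\sum_yh \sum_yc (ga * al) * (w yh yc * X yh yc)
  + \sum_yh \sum_yc (ga * be) * (w yh yc * Y yh yc)
  + \sum_yh \sum_yc (ga * de) * (w yh yc * Z yh yc)).
  rewrite -!big_split; apply: eq_bigr => yh _.
  rewrite -!big_split; apply: eq_bigr => yc _ /=; ring.
rewrite !dsumZ; ring.
Qed.

Lemma sw (I : Type) (s : seq I) (w : lab n -> lab n -> R) (F : lab n -> lab n -> I -> R) :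
  \sum_yh \sum_yc w yh yc * \sum_(k <- s) F yh yc k =
  \sum_(k <- s) \sum_yh \sum_yc w yh yc * F yh yc k.
Proof.
under eq_bigr do under eq_bigr do rewrite mulr_sumr.
under eq_bigr do rewrite exchange_big.
by rewrite exchange_big.
Qed.

End Game.
Section Game2.
Variable R : realType.
Variables (n m J : nat) (a b : 'I_J -> R) (f g : 'I_J -> nat -> nat -> R).

Lemma sumTP (c d : bool) (yh yc : lab n) :
  \sum_i ((c && yh i) : nat)%:R * ((d && yc i) : nat)%:R
  = (c : nat)%:R * (d : nat)%:R * (TP yh yc)%:R :> R.
Proof.
rewrite /TP natr_sum mulr_sumr; apply: eq_bigr => i _.
by case: c; case: d; case: (yh i); case: (yc i); rewrite /= ?mulr1n ?mulr0n ?mulr1 ?mulr0 ?mul0r.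
Qed.

Lemma sumTN (c d : bool) (yh yc : lab n) :
  \sum_i ((c && ~~ yh i) : nat)%:R * ((d && ~~ yc i) : nat)%:R
  = (c : nat)%:R * (d : nat)%:R * (TN yh yc)%:R :> R.
Proof.
rewrite /TN natr_sum mulr_sumr; apply: eq_bigr => i _.
by case: c; case: d; case: (yh i); case: (yc i); rewrite /= ?mulr1n ?mulr0n ?mulr1 ?mulr0 ?mul0r.
Qed.

Definition Hterm (yh yc : lab n) (k l : nat) (j : 'I_J) : R :=
  (g j k l)^-1 * (a j * \sum_i (((PP yh == k) && yh i) : nat)%:R * (((PP yc == l) && yc i) : nat)%:R
     + b j * \sum_i (((PP yh == k) && ~~ yh i) : nat)%:R * (((PP yc == l) && ~~ yc i) : nat)%:R
     + f j k l * (((PP yh == k) : nat)%:R * ((PP yc == l) : nat)%:R)).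

Lemma metric_expand (yh yc : lab n) :
  metric a b f g yh yc =
  \sum_(0 <= k < n.+1) \sum_(0 <= l < n.+1) \sum_(j < J) Hterm yh yc k l j.
Proof.
pose G k l := \sum_(j < J) (g j k l)^-1 * (a j * (TP yh yc)%:R + b j * (TN yh yc)%:R + f j k l).
transitivity (\sum_(0 <= k < n.+1) ((PP yh == k) : nat)%:R *
   \sum_(0 <= l < n.+1) ((PP yc == l) : nat)%:R * G k l).
  rewrite sum_pick ?PP_le // sum_pick ?PP_le //.
  by rewrite /metric /G; apply: eq_bigr => j _; rewrite mulrC.
apply: eq_bigr => k _; rewrite mulr_sumr; apply: eq_bigr => l _.
rewrite /G !mulr_sumr; apply: eq_bigr => j _.
rewrite /Hterm sumTP sumTN; ring.
Qed.

Lemma metric_part (P Q : lab n -> R) : is_dist P -> is_dist Q ->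
  \sum_yh \sum_yc P yh * Q yc * metric a b f g yh yc =
  \sum_(0 <= k < n.+1) \sum_(0 <= l < n.+1) \sum_(j < J)
     (g j k l)^-1 * (a j * dotn (p1 (Mof P) k) (p1 (Mof Q) l)
                     + b j * dotn (p0 (Mof P) k) (p0 (Mof Q) l)
                     + f j k l * rr (Mof P) k * rr (Mof Q) l).
Proof.
move=> hP hQ.
under eq_bigr do under eq_bigr do rewrite metric_expand.
rewrite sw; apply: eq_big_nat => k /andP[_ hk].
rewrite sw; apply: eq_big_nat => l /andP[_ hl].
rewrite sw; apply: eq_bigr => j _.
rewrite /Hterm lin.
rewrite (L1 P Q (fun i x => (((PP x == k) && x i) : nat)%:R) (fun i x => (((PP x == l) && x i) : nat)%:R)).
rewrite (L1 P Q (fun i x => (((PP x == k) && ~~ x i) : nat)%:R) (fun i x => (((PP x == l) && ~~ x i) : nat)%:R)).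
rewrite (L0 P Q (fun x => ((PP x == k) : nat)%:R) (fun x => ((PP x == l) : nat)%:R)).
rewrite /dotn !rrE //; congr (_ * (_ + _ + _)).
- by congr (_ * _); apply: eq_bigr => i _; rewrite !p1E.
- by congr (_ * _); apply: eq_bigr => i _; rewrite !p0E.
- by rewrite mulrA.
Qed.

End Game2.
Section Game3.
Variable R : realType.
Variables (n m J : nat) (a b : 'I_J -> R) (f g : 'I_J -> nat -> nat -> R).
Variables (Psi : 'M[R]_(m, n)) (y : lab n) (theta : 'cV[R]_m).

Lemma theta_part (yc : lab n) :
  dotc theta (Psi *m (labvec R yc - labvec R y)) =
  dotn (fun i => (yc i : nat)%:R) (PsiTtheta Psi theta)
  - dotn (fun i => (y i : nat)%:R) (PsiTtheta Psi theta).
Proof.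
rewrite /dotc /dotn /PsiTtheta -sumrB.
under eq_bigr do rewrite mxE mulr_sumr.
rewrite exchange_big /=; apply: eq_bigr => i _.
rewrite -mulrBl mulr_sumr; apply: eq_bigr => d _.
rewrite !mxE; ring.
Qed.

Lemma margE (Q : lab n -> R) i : marg (Mof Q) i = \sum_x Q x * (x i : nat)%:R.
Proof.
rewrite /marg; under eq_bigr do rewrite mxE.
rewrite exchange_big /=; apply: eq_bigr => x _.
rewrite -mulr_sumr; congr (_ * _).
case hx: (x i) => /=.
  by rewrite sum_ind; have := PP_ge x i; rewrite hx => ->.
by rewrite big1.
Qed.

Lemma game_eq (P Q : lab n -> R) : is_dist P -> is_dist Q ->
  game_value a b f g Psi y theta P Q =
  marg_objective a b f g Psi theta (Mof P) (Mof Q)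
  + dotn (fun i => (y i : nat)%:R) (PsiTtheta Psi theta).
Proof.
move=> hP hQ; rewrite /game_value /marg_objective.
under eq_bigr do under eq_bigr do rewrite theta_part mulrBr.
under eq_bigr do rewrite sumrB.
rewrite sumrB metric_part //.
set Dy := dotn _ _.
set PT := PsiTtheta Psi theta.
have -> : \sum_yh \sum_yc P yh * Q yc *
    (dotn (fun i => (yc i : nat)%:R) PT - Dy)
  = dotn (marg (Mof Q)) PT - Dy.
  rewrite (eq_bigr (fun yh => \sum_yc P yh * Q yc * (1 * (dotn (fun i => (yc i : nat)%:R) PT - Dy)))); last first.
    by move=> yh _; apply: eq_bigr => yc _; rewrite mul1r.
  rewrite (L0 P Q (fun=> 1) (fun yc => dotn (fun i => (yc i : nat)%:R) PT - Dy)).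
  case: hP => _ P1; case: hQ => _ Q1.
  under eq_bigr do rewrite mulr1.
  rewrite P1 mul1r.
  under eq_bigr do rewrite mulrBr.
  rewrite sumrB -mulr_suml Q1 mul1r; congr (_ - _).
  rewrite /dotn; under eq_bigr do rewrite mulr_sumr.
  rewrite exchange_big /=; apply: eq_bigr => i _.
  by rewrite margE mulr_suml; apply: eq_bigr => x _; rewrite mulrA.
ring.
Qed.

End Game3.
Local Open Scope ereal_scope.
Lemma sup_shift (R : realType) T (A : set T) (H : T -> \bar R) (c : R) :
  ereal_sup [set H t + c%:E | t in A] = ereal_sup [set H t | t in A] + c%:E.
Proof.
apply/le_anti/andP; split.
- apply: ge_ereal_sup => _ [t At <-]; rewrite leeD2r //.
  by apply: ereal_sup_ubound; exists t.
- rewrite -leeBrDr //; apply: ge_ereal_sup => _ [t At <-].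
  rewrite leeBrDr //; by apply: ereal_sup_ubound; exists t.
Qed.
Lemma inf_shift (R : realType) T (A : set T) (H : T -> \bar R) (c : R) :
  ereal_inf [set H t + c%:E | t in A] = ereal_inf [set H t | t in A] + c%:E.
Proof.
apply/le_anti/andP; split.
- rewrite -leeBlDr //; apply: le_ereal_inf_tmp => _ [t At <-].
  rewrite leeBlDr //; by apply: ereal_inf_lbound; exists t.
- apply: le_ereal_inf_tmp => _ [t At <-]; rewrite leeD2r //.
  by apply: ereal_inf_lbound; exists t.
Qed.

Theorem theorem2 (R : realType) (n m J : nat) (hn : (0 < n)%N) (hm : (0 < m)%N)
  (y : lab n) (Psi : 'M[R]_(m, n))
  (a b : 'I_J -> R) (f g : 'I_J -> nat -> nat -> R)
  (hg : forall j k l, (k <= n)%N -> (l <= n)%N -> g j k l != 0%R) :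
  ereal_sup [set ereal_inf [set ereal_sup
        [set (game_value a b f g Psi y theta P Q)%:E | P in [set P | is_dist P]]
      | Q in [set Q | is_dist Q]] | theta in [set: 'cV[R]_m]]
  =
  ereal_sup [set ereal_inf [set ereal_sup
        [set (marg_objective a b f g Psi theta P Q)%:E | P in [set P | inDelta P]]
      | Q in [set Q | inDelta Q]]
      + (dotn (fun i => (y i)%:R) (PsiTtheta Psi theta))%:E
    | theta in [set: 'cV[R]_m]].
Proof.
have key : forall theta : 'cV[R]_m,
  ereal_inf [set ereal_sup
        [set (game_value a b f g Psi y theta P Q)%:E | P in [set P | is_dist P]]
      | Q in [set Q | is_dist Q]] =
  ereal_inf [set ereal_sup
        [set (marg_objective a b f g Psi theta P Q)%:E | P in [set P | inDelta P]]
      | Q in [set Q | inDelta Q]]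
      + (dotn (fun i => (y i)%:R) (PsiTtheta Psi theta))%:E.
  move=> theta.
  set c := dotn _ _.
  have inner : forall Q, is_dist Q ->
    ereal_sup [set (game_value a b f g Psi y theta P Q)%:E | P in [set P | is_dist P]]
    = ereal_sup [set (marg_objective a b f g Psi theta X (Mof Q))%:E | X in [set P | inDelta P]]
      + c%:E.
    move=> Q hQ; rewrite -sup_shift; congr ereal_sup.
    apply/seteqP; split => _ [P hP <-].
      exists (Mof P); first exact: dist_inDelta.
      by rewrite game_eq // EFinD.
    have [P' [hP' <-]] := inDelta_dist hP.
    by exists P' => //; rewrite game_eq // EFinD.
  rewrite -inf_shift; congr ereal_inf.
  apply/seteqP; split => _ [Q hQ <-].
    exists (Mof Q); first exact: dist_inDelta.
    by rewrite inner.
  have [Q' [hQ' <-]] := inDelta_dist hQ.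
  by exists Q' => //; rewrite inner.
congr ereal_sup; apply/seteqP; split => _ [theta _ <-]; exists theta => //.
Qed.
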